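(* Let $\mathcal{G}$ be a finite-dimensional solvable Lie algebra with basis $\{X_i\}$ and structure constants $[X_i,X_j]=C_{ij}^k X_k$, and let $S=\{\lambda_\alpha\}$ be a finite abelian semigroup with 2-selector $K_{\alpha\beta}^{\gamma}$. Then the $S$-expanded algebra $\mathcal{G}_S=S\otimes\mathcal{G}$ is solvable.
   Context: For a finite abelian semigroup $S=\{\lambda_\alpha\}$, the 2-selector is defined by $K_{\alpha\beta}^{\gamma}=1$ if $\lambda_\alpha\lambda_\beta=\lambda_\gamma$ and $0$ otherwise. The $S$-expanded algebra $\mathcal{G}_S=S\otimes\mathcal{G}$ is the vector space with basis $X_{(i,\alpha)}=\lambda_\alpha\otimes X_i$ and Lie bracket $[X_{(i,\alpha)},X_{(j,\beta)}]=K_{\alpha\beta}^{\gamma}C_{ij}^k X_{(k,\gamma)}$ (this is a Lie algebra). A Lie algebra $\mathcal{L}$ is solvable if the derived series $\mathcal{L}^{(0)}=\mathcal{L}$, $\mathcal{L}^{(n)}=[\mathcal{L}^{(n-1)},\mathcal{L}^{(n-1)}]$ reaches $0$. *)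

(* Defs.v *)
From HB Require Import structures.
From mathcomp Require Import all_boot all_order all_algebra.
Set Implicit Arguments. Unset Strict Implicit. Unset Printing Implicit Defensive.
Import GRing.Theory.
Local Open Scope ring_scope.

(* A finite-dimensional Lie algebra over a field F is presented by a finite
   basis indexed by I and structure constants C i j k : [X_i, X_j] = sum_k C i j k X_k. *)

Definition is_lie_constants (F : fieldType) (I : finType) (C : I -> I -> I -> F) : Prop :=
  (forall i k, C i i k = 0) /\
  (forall i j k, C i j k = - C j i k) /\
  (forall i j k m,
     \sum_(l : I) (C i j l * C l k m + C j k l * C l i m + C k i l * C l j m) = 0).

Definition sc_bracket (F : fieldType) (I : finType) (C : I -> I -> I -> F)
  (x y : I -> F) : I -> F :=
  fun k => \sum_(i : I) \sum_(j : I) x i * y j * C i j k.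

Inductive in_span (F : fieldType) (I : finType) (P : (I -> F) -> Prop) : (I -> F) -> Prop :=
  | span_zero : in_span P (fun _ => 0)
  | span_gen v : P v -> in_span P v
  | span_add v w : in_span P v -> in_span P w -> in_span P (fun i => v i + w i)
  | span_scale (a : F) v : in_span P v -> in_span P (fun i => a * v i).

Fixpoint derived (F : fieldType) (I : finType) (C : I -> I -> I -> F) (n : nat)
  : (I -> F) -> Prop :=
  match n with
  | 0 => fun _ => True
  | n'.+1 => in_span (fun v => exists x y, derived C n' x /\ derived C n' y
                                  /\ v = sc_bracket C x y)
  end.

Definition solvable_sc (F : fieldType) (I : finType) (C : I -> I -> I -> F) : Prop :=
  exists n : nat, forall v, derived C n v -> forall i, v i = 0.

Definition abelian_semigroup (S : Type) (mul : S -> S -> S) : Prop :=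
  associative mul /\ commutative mul.

Definition selector (F : fieldType) (S : finType) (mul : S -> S -> S) (a b c : S) : F :=
  if mul a b == c then 1 else 0.

(* structure constants of the S-expanded algebra, basis X_(i,a) = lambda_a (x) X_i *)
Definition expanded_constants (F : fieldType) (I S : finType) (mul : S -> S -> S)
  (C : I -> I -> I -> F) (p q r : I * S) : F :=
  selector F mul p.2 q.2 r.2 * C p.1 q.1 r.1.

(* Main.v *)
Require Import Defs.
From mathcomp Require Import all_boot all_order all_algebra.
From mathcomp Require Import ring.
From Stdlib Require Import FunctionalExtensionality.
Import GRing.Theory.
Local Open Scope ring_scope.

Lemma span_sum (F : fieldType) (I A : finType) (P : (I -> F) -> Prop)
  (f : A -> I -> F) (r : seq A) :
  (forall a, in_span P (f a)) -> in_span P (fun k => \sum_(a <- r) f a k).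
Proof.
move=> H; elim: r => [|a r IH].
  have -> : (fun k : I => \sum_(a <- [::]) f a k) = (fun _ => 0).
    by apply: functional_extensionality => k; rewrite big_nil.
  exact: span_zero.
have -> : (fun k : I => \sum_(b <- a :: r) f b k) =
          (fun k => f a k + \sum_(b <- r) f b k).
  by apply: functional_extensionality => k; rewrite big_cons.
exact: span_add.
Qed.

Lemma pairS (F : fieldType) (I S : finType) (G : I * S -> F) :
  \sum_(p : I * S) G p = \sum_(i : I) \sum_(a : S) G (i, a).
Proof. by rewrite pair_big; apply: eq_bigr => -[i a]. Qed.

Lemma derived_proj (F : fieldType) (I : finType) (C : I -> I -> I -> F)
  (S : finType) (mul : S -> S -> S) n :
  forall v, derived (expanded_constants mul C) n v ->
  forall c, derived C n (fun i => v (i, c)).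
Proof.
elim: n => [//|n IH] v /= Hv c.
elim: Hv => [|w Hw|w1 w2 _ H1 _ H2|a w _ H].
- exact: span_zero.
- case: Hw => x [y [Hx [Hy ->]]].
  have -> : (fun i => sc_bracket (expanded_constants mul C) x y (i, c)) =
    (fun k => \sum_(a <- index_enum S) (fun k => \sum_(b <- index_enum S)
       (fun k => selector F mul a b c *
          sc_bracket C (fun i => x (i, a)) (fun j => y (j, b)) k) k) k).
    apply: functional_extensionality => k.
    rewrite /sc_bracket /expanded_constants /=.
    rewrite pairS exchange_big /=; apply: eq_bigr => a _.
    transitivity (\sum_(i : I) \sum_(j : I) \sum_(b : S)
      x (i, a) * y (j, b) * (selector F mul a b c * C i j k)).
      by apply: eq_bigr => i _; rewrite pairS.
    transitivity (\sum_(i : I) \sum_(b : S) \sum_(j : I)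
      x (i, a) * y (j, b) * (selector F mul a b c * C i j k)).
      by apply: eq_bigr => i _; rewrite exchange_big.
    rewrite exchange_big /=.
    apply: eq_bigr => b _.
    rewrite mulr_sumr; apply: eq_bigr => i _.
    rewrite mulr_sumr; apply: eq_bigr => j _.
    by rewrite /=; ring.
  apply: span_sum => a; apply: span_sum => b.
  apply: span_scale; apply: span_gen.
  by exists (fun i => x (i, a)), (fun j => y (j, b)); split; [exact: IH|split; [exact: IH|]].
- exact: span_add.
- exact: span_scale.
Qed.

Theorem theorem1 (F : fieldType) (I : finType) (C : I -> I -> I -> F)
  (S : finType) (mul : S -> S -> S) :
  is_lie_constants C -> solvable_sc C -> abelian_semigroup mul ->
  solvable_sc (expanded_constants mul C).
Proof.
move=> _ [n Hn] _; exists n => v Hv [i c].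
exact: (Hn _ (@derived_proj _ _ _ _ _ _ _ Hv c) i).
Qed.
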